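(* Let $n\ge2$ be an integer that is not a perfect square, and let $a,b$ be positive rational numbers with $a^2-nb^2=1$. Put $u=a+b\sqrt n$ and for $k\ge1$ write $u^k=a_k+b_k\sqrt n$ with $a_k,b_k\in\mathbb Q$. Then $$\mathcal L\left(\frac1{u^2}\right)=\sum_{k=2}^{\infty}\mathcal L\left(\frac{1}{(b_k/b)^2}\right).$$ Moreover, if $a,b\in\mathbb Z$ then $b_k/b\in\mathbb Z$ for all $k\ge1$.
   Context: $\mathcal L$ is the Rogers dilogarithm: for real $z\le1$, $\mathcal L(z)=\mathrm{Li}_2(z)+\tfrac12\log|z|\log(1-z)$, where $\mathrm{Li}_2(z)=\sum_{m\ge1}z^m/m^2$. *)

(* Defs.v *)
From Stdlib Require Import Reals Lra QArith Qreals ClassicalEpsilon.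
Open Scope R_scope.

(* Dilogarithm Li_2(z) = sum_{m>=1} z^m/m^2, defined as the (chosen) sum of
   the series; for |z| <= 1 the series converges, so this is its value. *)
Definition Li2 (z : R) : R :=
  epsilon (inhabits 0)
    (fun l => infinite_sum (fun m => z ^ (S m) / (INR (S m)) ^ 2) l).

Definition RogersL (z : R) : R :=
  Li2 z + / 2 * ln (Rabs z) * ln (1 - z).

(* Main.v *)
Require Import Defs.
From Stdlib Require Import Reals QArith Qreals ZArith Lra Lia ClassicalEpsilon Znumtheory.
From Coquelicot Require Import Coquelicot.
Open Scope R_scope.

Definition cc (m : nat) : R := / INR (S m) ^ 2.
Definition ee (m : nat) : R := / INR (S m).
Definition one_s (m : nat) : R := 1.
Definition Li (z : R) : R := PSeries (PS_incr_1 cc) z.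
Definition GG (z : R) : R := PSeries (PS_incr_1 ee) z.

Lemma INRS_pos m : 0 < INR (S m).
Proof. apply lt_0_INR; lia. Qed.

Lemma radius_one : CV_radius one_s = 1.
Proof.
  replace (Finite 1) with (Finite (/ 1)) by (f_equal; field).
  apply CV_radius_finite_DAlembert; unfold one_s.
  - intros; lra.
  - lra.
  - eapply is_lim_seq_ext; [|apply is_lim_seq_const].
    intros n; simpl. rewrite Rabs_right; [field|lra].
Qed.

Lemma der_cc n : PS_derive (PS_incr_1 cc) n = ee n.
Proof.
  unfold PS_derive. change (PS_incr_1 cc (S n)) with (cc n).
  unfold cc, ee. pose proof (INRS_pos n). field. lra.
Qed.

Lemma der_ee n : PS_derive (PS_incr_1 ee) n = one_s n.
Proof.
  unfold PS_derive. change (PS_incr_1 ee (S n)) with (ee n).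
  unfold one_s, ee. pose proof (INRS_pos n). field. lra.
Qed.

Lemma radius_ee : CV_radius ee = 1.
Proof.
  rewrite <- CV_radius_incr_1, <- CV_radius_derive, <- radius_one.
  apply CV_radius_ext. apply der_ee.
Qed.

Lemma radius_cc : CV_radius cc = 1.
Proof.
  rewrite <- CV_radius_incr_1, <- CV_radius_derive, <- radius_ee.
  apply CV_radius_ext. apply der_cc.
Qed.

Lemma in_radius x r : Rabs x < 1 -> CV_radius r = 1 -> Rbar_lt (Rabs x) (CV_radius r).
Proof. intros H E; rewrite E; exact H. Qed.

Lemma is_derive_Li x : Rabs x < 1 -> is_derive Li x (PSeries ee x).
Proof.
  intros H. unfold Li.
  rewrite <- (PSeries_ext _ _ x der_cc).
  apply is_derive_PSeries. rewrite CV_radius_incr_1, radius_cc. exact H.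
Qed.

Lemma PSeries_one x : Rabs x < 1 -> PSeries one_s x = / (1 - x).
Proof.
  intros H. apply is_pseries_unique. apply is_pseries_R.
  eapply is_series_ext; [|apply is_series_geom; exact H].
  intros n; unfold one_s; cbv beta; rewrite Rmult_1_l; reflexivity.
Qed.

Lemma is_derive_GG x : Rabs x < 1 -> is_derive GG x (/ (1 - x)).
Proof.
  intros H. unfold GG. rewrite <- PSeries_one by exact H.
  rewrite <- (PSeries_ext _ _ x der_ee).
  apply is_derive_PSeries. rewrite CV_radius_incr_1, radius_ee. exact H.
Qed.

Lemma deriv0_const (f : R -> R) a b :
  (forall x, a < x < b -> is_derive f x 0) ->
  forall x y, a < x < b -> a < y < b -> f x = f y.
Proof.
  intros Hd x y Hx Hy.
  destruct (MVT_gen f x y (fun _ => 0)) as [c [_ Hc]].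
  - intros z Hz. apply Hd. split.
    + apply Rle_lt_trans with (Rmin x y); [apply Rmin_glb; lra| lra].
    + apply Rlt_le_trans with (Rmax x y); [lra| apply Rmax_lub; lra].
  - intros z Hz. apply derivable_continuous_pt. exists 0. apply is_derive_Reals, Hd. split.
    + apply Rlt_le_trans with (Rmin x y); [apply Rmin_glb_lt; lra| lra].
    + apply Rle_lt_trans with (Rmax x y); [lra| apply Rmax_lub_lt; lra].
  - lra.
Qed.

Lemma dplus f g x df dg : is_derive f x df -> is_derive g x dg ->
  is_derive (fun t => f t + g t) x (df + dg).
Proof. intros. apply (is_derive_plus f g); assumption. Qed.

Lemma dminus f g x df dg : is_derive f x df -> is_derive g x dg ->
  is_derive (fun t => f t - g t) x (df - dg).
Proof. intros. apply (is_derive_minus f g); assumption. Qed.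

Lemma dcomp f g x df dg : is_derive f (g x) df -> is_derive g x dg ->
  is_derive (fun t => f (g t)) x (dg * df).
Proof. intros. apply (is_derive_comp f g); assumption. Qed.

Lemma GG_ln x : Rabs x < 1 -> GG x = - ln (1 - x).
Proof.
  intros H.
  assert (E : forall t, -1 < t < 1 -> GG t + ln (1 - t) = GG 0 + ln (1 - 0)).
  { intros t Ht. apply (deriv0_const (fun t => GG t + ln (1 - t)) (-1) 1); try lra.
    intros z Hz. replace 0 with (/ (1 - z) + (-1) * / (1 - z)) by (field; lra).
    apply dplus.
    - apply is_derive_GG. apply Rabs_def1; lra.
    - auto_derive; [lra| field; lra]. }
  rewrite Rabs_lt_between in H. specialize (E x H).
  unfold GG in E at 2. rewrite PSeries_0 in E. simpl in E.
  rewrite Rminus_0_r, ln_1 in E. unfold zero in E; simpl in E. lra.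
Qed.

Lemma Li2_Li z : Rabs z < 1 -> Li2 z = Li z.
Proof.
  intros H.
  assert (S1 : infinite_sum (fun m => z ^ (S m) / INR (S m) ^ 2) (Li z)).
  { apply is_series_Reals. unfold Li. rewrite PSeries_incr_1.
    assert (P : is_pseries cc z (PSeries cc z)).
    { apply PSeries_correct, CV_radius_inside. rewrite radius_cc. exact H. }
    apply is_pseries_R in P.
    apply (is_series_scal_l z) in P.
    eapply is_series_ext; [|exact P].
    intros n; cbv beta. change (scal z (cc n * z ^ n)) with (z * (cc n * z ^ n)).
    unfold cc. change (z ^ S n) with (z * z ^ n). unfold Rdiv.
    change (z * (/ INR (S n) ^ 2 * z ^ n) = z * z ^ n * / INR (S n) ^ 2 :> R). ring. }
  unfold Li2.
  assert (E := epsilon_spec (inhabits 0)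
     (fun l => infinite_sum (fun m => z ^ (S m) / INR (S m) ^ 2) l) (ex_intro _ _ S1)).
  cbv beta in E. eapply uniqueness_sum; eassumption.
Qed.

Definition dL (x : R) : R := - / 2 * (ln (1 - x) / x + ln x / (1 - x)).

Lemma locally_01 x (P : R -> Prop) : 0 < x < 1 -> (forall t, 0 < t < 1 -> P t) -> locally x P.
Proof.
  intros Hx HP.
  assert (Hp : 0 < Rmin x (1 - x)) by (apply Rmin_glb_lt; lra).
  exists (mkposreal _ Hp). intros t Ht. apply HP.
  change (Rabs (t - x) < Rmin x (1 - x)) in Ht.
  apply Rabs_lt_between in Ht.
  pose proof (Rmin_l x (1-x)). pose proof (Rmin_r x (1-x)). lra.
Qed.

Lemma RL_formula t : 0 < t < 1 -> RogersL t = Li t + / 2 * ln t * ln (1 - t).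
Proof.
  intros Ht. unfold RogersL. rewrite Li2_Li by (apply Rabs_def1; lra).
  rewrite Rabs_right by lra. reflexivity.
Qed.

Lemma PSeries_ee x : 0 < x < 1 -> PSeries ee x = - ln (1 - x) / x.
Proof.
  intros Hx. rewrite <- GG_ln by (apply Rabs_def1; lra).
  unfold GG. rewrite PSeries_incr_1. field. lra.
Qed.

Lemma is_derive_RL x : 0 < x < 1 -> is_derive RogersL x (dL x).
Proof.
  intros Hx.
  apply is_derive_ext_loc with (f := fun t => Li t + / 2 * ln t * ln (1 - t)).
  { apply locally_01; auto. intros t Ht. symmetry. apply RL_formula; auto. }
  replace (dL x) with (PSeries ee x + (/2 * (/x * ln (1-x) + ln x * (-1 / (1 - x))))).
  2:{ rewrite PSeries_ee by auto. unfold dL. field. lra. }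
  apply dplus.
  - apply is_derive_Li. apply Rabs_def1; lra.
  - auto_derive; [lra|]. unfold Rminus. field. lra.
Qed.

Lemma cont_RL x : 0 < x < 1 -> continuity_pt RogersL x.
Proof.
  intros Hx. apply derivable_continuous_pt. exists (dL x). apply is_derive_Reals, is_derive_RL; auto.
Qed.

Lemma ln_le_sub1 t : 0 < t -> ln t <= t - 1.
Proof. intros H. pose proof (exp_ineq1_le (ln t)). rewrite exp_ln in H0 by lra. lra. Qed.

Lemma lnln_bound t : 0 < t < 1 -> 0 <= ln t * ln (1 - t) <= 2 * sqrt t / (1 - t).
Proof.
  intros Ht.
  pose proof (ln_le_sub1 t ltac:(lra)) as H1.
  pose proof (ln_le_sub1 (1 - t) ltac:(lra)) as H2.
  pose proof (ln_le_sub1 (/ (1 - t)) ltac:(apply Rinv_0_lt_compat; lra)) as H3.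
  rewrite ln_Rinv in H3 by lra.
  assert (Hs : 0 < sqrt t) by (apply sqrt_lt_R0; lra).
  pose proof (ln_le_sub1 (/ sqrt t) ltac:(apply Rinv_0_lt_compat; lra)) as H4.
  rewrite ln_Rinv in H4 by lra.
  assert (E : ln t = 2 * ln (sqrt t)).
  { rewrite <- (sqrt_sqrt t) at 1 by lra. rewrite ln_mult by lra. ring. }
  assert (Hst : sqrt t * sqrt t = t) by (apply sqrt_sqrt; lra).
  set (a := - ln t). set (b := - ln (1 - t)).
  assert (Ha : 0 <= a <= 2 / sqrt t).
  { unfold a. split; [lra|]. rewrite E. unfold Rdiv.
    assert (0 < / sqrt t) by (apply Rinv_0_lt_compat; lra). lra. }
  assert (Hb : 0 <= b <= t / (1 - t)).
  { unfold b. split; [lra|]. unfold Rdiv. replace (t * / (1 - t)) with (/ (1 - t) - 1) by (field; lra). lra. }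
  replace (ln t * ln (1 - t)) with (a * b) by (unfold a, b; ring).
  split; [apply Rmult_le_pos; lra|].
  replace (2 * sqrt t / (1 - t)) with ((2 / sqrt t) * (t / (1 - t))).
  2:{ rewrite <- Hst at 2. field. lra. }
  apply Rmult_le_compat; lra.
Qed.

Lemma Li_0 : Li 0 = 0.
Proof. unfold Li. rewrite PSeries_0. reflexivity. Qed.

Lemma RL_0 : RogersL 0 = 0.
Proof.
  unfold RogersL. rewrite Li2_Li by (rewrite Rabs_R0; lra). rewrite Li_0.
  rewrite Rminus_0_r, ln_1. ring.
Qed.

Lemma lim_RL0 u : (forall n, 0 < u n < 1) -> is_lim_seq u 0 ->
  is_lim_seq (fun n => RogersL (u n)) 0.
Proof.
  intros Hu Hl.
  apply is_lim_seq_ext with (u := fun n => Li (u n) + / 2 * (ln (u n) * ln (1 - u n))).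
  { intros n. rewrite RL_formula by auto. ring. }
  assert (HL : is_lim_seq (fun n => ln (u n) * ln (1 - u n)) 0).
  { apply is_lim_seq_le_le with (u := fun n => 0) (w := fun n => 2 * sqrt (u n) / (1 - u n)).
    + intros n. apply lnln_bound; auto.
    + apply is_lim_seq_const.
    + replace 0 with ((fun t => 2 * sqrt t / (1 - t)) 0) by (rewrite sqrt_0; field).
      apply (is_lim_seq_continuous (fun t => 2 * sqrt t / (1 - t))); auto.
      apply continuity_pt_div.
      * apply continuity_pt_mult. apply continuity_pt_const. intros a b; auto.
        apply continuity_pt_sqrt. lra.
      * apply continuity_pt_minus. apply continuity_pt_const. intros a b; auto. apply continuity_pt_id.
      * lra. }
  apply (is_lim_seq_scal_l _ (/2) 0) in HL. simpl in HL. rewrite Rmult_0_r in HL.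
  assert (HLi : is_lim_seq (fun n => Li (u n)) (Li 0)).
  { apply is_lim_seq_continuous; auto.
    apply derivable_continuous_pt. exists (PSeries ee 0).
    apply is_derive_Reals, is_derive_Li. rewrite Rabs_R0; lra. }
  rewrite Li_0 in HLi.
  replace 0 with (0 + 0) by ring.
  apply is_lim_seq_plus'; auto.
Qed.

Lemma refl_RL x y : 0 < x < 1 -> 0 < y < 1 ->
  RogersL x + RogersL (1 - x) = RogersL y + RogersL (1 - y).
Proof.
  intros Hx Hy.
  apply (deriv0_const (fun t => RogersL t + RogersL (1 - t)) 0 1); auto.
  intros t Ht.
  replace 0 with (dL t + (-1) * dL (1 - t)).
  2:{ unfold dL. replace (1 - (1 - t)) with t by ring. ring. }
  apply dplus.
  - apply is_derive_RL; auto.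
  - apply (dcomp RogersL (fun t => 1 - t)).
    + apply is_derive_RL; lra.
    + auto_derive; auto.
Qed.

Lemma ln_div a b : 0 < a -> 0 < b -> ln (a / b) = ln a - ln b.
Proof. intros. unfold Rdiv. rewrite ln_mult, ln_Rinv; try ring; auto. apply Rinv_0_lt_compat; auto. Qed.

Lemma cont_of_deriv f x df : is_derive f x df -> continuity_pt f x.
Proof. intros H. apply derivable_continuous_pt. exists df. apply is_derive_Reals; auto. Qed.

Lemma half_pow_lim : is_lim_seq (fun n => (/2) ^ (S n)) 0.
Proof.
  apply is_lim_seq_ext with (u := fun n => /2 * (/2)^n). { intros; simpl; ring. }
  replace (Finite 0) with (Rbar_mult (/2) 0) by (simpl; f_equal; ring).
  apply is_lim_seq_scal_l. apply is_lim_seq_geom. rewrite Rabs_right; lra.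
Qed.


Lemma frac01 a b : 0 < a -> a < b -> 0 < a / b < 1.
Proof.
  intros. split. apply Rdiv_lt_0_compat; lra.
  apply (Rmult_lt_reg_r b); [lra|]. unfold Rdiv. rewrite Rmult_assoc, Rinv_l; lra.
Qed.

Lemma five_alg t y : 0 < t < 1 -> 0 < y < 1 ->
  dL t - y * dL (t * y) - ((1 - y) / (1 - t * y) ^ 2) * dL (t * (1 - y) / (1 - t * y))
  - (- (y * (1 - y)) / (1 - t * y) ^ 2) * dL (y * (1 - t) / (1 - t * y)) = 0.
Proof.
  intros Ht Hy.
  assert (Hd : 0 < 1 - t * y) by nra.
  unfold dL.
  replace (1 - t * (1 - y) / (1 - t * y)) with ((1 - t) / (1 - t * y)) by (field; lra).
  replace (1 - y * (1 - t) / (1 - t * y)) with ((1 - y) / (1 - t * y)) by (field; lra).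
  rewrite !ln_div by (try apply Rmult_lt_0_compat; lra).
  rewrite !ln_mult by lra.
  field. repeat split; try lra; nra.
Qed.

Lemma rng_p x y : 0 < x < 1 -> 0 < y < 1 -> 0 < x * (1 - y) / (1 - x * y) < 1.
Proof. intros. apply frac01; nra. Qed.
Lemma rng_r x y : 0 < x < 1 -> 0 < y < 1 -> 0 < y * (1 - x) / (1 - x * y) < 1.
Proof. intros. apply frac01; nra. Qed.
Lemma rng_m x y : 0 < x < 1 -> 0 < y < 1 -> 0 < x * y < 1.
Proof. intros. nra. Qed.

Definition FF (y t : R) : R := RogersL t + RogersL y - RogersL (t * y)
  - RogersL (t * (1 - y) / (1 - t * y)) - RogersL (y * (1 - t) / (1 - t * y)).

Lemma FF_const y : 0 < y < 1 -> forall s t, 0 < s < 1 -> 0 < t < 1 -> FF y s = FF y t.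
Proof.
  intros Hy. apply deriv0_const. intros t Ht.
  assert (Hd : 0 < 1 - t * y) by nra.
  rewrite <- (five_alg t y Ht Hy). unfold FF.
  replace (dL t - y * dL (t * y)) with (dL t + 0 - y * dL (t * y)) by ring.
  apply dminus; [apply dminus; [apply dminus|]|].
  - apply dplus. apply is_derive_RL; auto. auto_derive; auto.
  - apply (dcomp RogersL (fun t => t * y)). apply is_derive_RL, rng_m; auto.
    auto_derive; auto. ring.
  - apply (dcomp RogersL (fun t => t * (1 - y) / (1 - t * y))). apply is_derive_RL, rng_p; auto.
    auto_derive. lra. field. lra.
  - apply (dcomp RogersL (fun t => y * (1 - t) / (1 - t * y))). apply is_derive_RL, rng_r; auto.
    auto_derive. lra. field. lra.
Qed.

Lemma hp01 n : 0 < (/2) ^ (S n) < 1.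
Proof.
  pose proof (pow_lt_1_compat (/2) (S n) ltac:(lra) ltac:(lia)).
  pose proof (pow_lt (/2) (S n) ltac:(lra)). lra.
Qed.

Lemma lim_rat (f : R -> R) df : is_derive f 0 df ->
  is_lim_seq (fun n => f ((/2) ^ (S n))) (f 0).
Proof.
  intros H. apply is_lim_seq_continuous. eapply cont_of_deriv; eauto. apply half_pow_lim.
Qed.

Lemma five_term x y : 0 < x < 1 -> 0 < y < 1 ->
  RogersL x + RogersL y = RogersL (x * y) + RogersL (x * (1 - y) / (1 - x * y))
    + RogersL (y * (1 - x) / (1 - x * y)).
Proof.
  intros Hx Hy.
  assert (E : FF y x = 0).
  { set (u := fun n : nat => (/2) ^ (S n)).
    assert (Hu : forall n, 0 < u n < 1) by (intros; apply hp01).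
    assert (L1 : is_lim_seq (fun n => FF y (u n)) (FF y x)).
    { eapply is_lim_seq_ext; [|apply is_lim_seq_const]. intros n. cbv beta.
      apply FF_const; auto. }
    assert (L2 : is_lim_seq (fun n => FF y (u n)) 0).
    { unfold FF.
      replace 0 with (0 + RogersL y - 0 - 0 - RogersL y) by ring.
      apply is_lim_seq_minus'; [apply is_lim_seq_minus'; [apply is_lim_seq_minus';
        [apply is_lim_seq_plus'|]|]|].
      - apply lim_RL0; auto. apply half_pow_lim.
      - apply is_lim_seq_const.
      - apply (lim_RL0 (fun n => u n * y)). intros; apply rng_m; auto.
        replace 0 with ((fun t => t * y) 0) by ring. apply (lim_rat (fun t => t * y) y). auto_derive; auto. ring.
      - apply (lim_RL0 (fun n => u n * (1 - y) / (1 - u n * y))). intros; apply rng_p; auto.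
        replace 0 with ((fun t => t * (1 - y) / (1 - t * y)) 0) by (field; lra).
        eapply (lim_rat (fun t => t * (1 - y) / (1 - t * y))). auto_derive. lra. reflexivity.
      - apply (is_lim_seq_continuous RogersL (fun n => y * (1 - u n) / (1 - u n * y))).
        apply cont_RL; auto.
        assert (D : is_derive (fun t => y * (1 - t) / (1 - t * y)) 0
            (((fun t => y * (1 - t) / (1 - t * y)) 0) * 0 + (y*y - y))).
        { auto_derive. lra. field. }
        assert (H := lim_rat _ _ D). cbv beta in H.
        replace (y * (1 - 0) / (1 - 0 * y)) with y in H by (field; lra). exact H. }
    apply is_lim_seq_unique in L1. apply is_lim_seq_unique in L2.
    rewrite L1 in L2. injection L2; auto. }
  unfold FF in E. lra.
Qed.

Section Tele.
Variable q : R.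
Hypothesis Hq : 0 < q < 1.

Definition Am (m : nat) := q ^ m * (1 - q) / (1 - q ^ (S m)).
Definition Bm (m : nat) := (1 - q) / (1 - q ^ (S m)).
Definition ym (m : nat) := q ^ m * (1 - q) ^ 2 / (1 - q ^ (S m)) ^ 2.
Definition TT (m : nat) := RogersL (Am m) + RogersL (Bm m).

Lemma qpow_bounds m : (1 <= m)%nat -> 0 < q ^ m < 1.
Proof.
  intros H. pose proof (pow_lt_1_compat q m ltac:(lra) ltac:(lia)).
  pose proof (pow_lt q m ltac:(lra)). lra.
Qed.

Lemma Am_rng m : (1 <= m)%nat -> 0 < Am m < 1.
Proof.
  intros H. unfold Am. simpl. pose proof (qpow_bounds m H).
  apply frac01; nra.
Qed.

Lemma Bm_rng m : (1 <= m)%nat -> 0 < Bm m < 1.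
Proof.
  intros H. unfold Bm. simpl. pose proof (qpow_bounds m H).
  apply frac01; nra.
Qed.

Lemma tele_step m : (1 <= m)%nat -> TT m = RogersL (ym m) + TT (S m).
Proof.
  intros H. unfold TT.
  rewrite (five_term (Am m) (Bm m) (Am_rng m H) (Bm_rng m H)).
  pose proof (qpow_bounds m H) as Hw.
  assert (E1 : Am m * Bm m = ym m).
  { unfold Am, Bm, ym. simpl. field. nra. }
  assert (E0 : 1 - Am m * Bm m = (1 - q ^ m) * (1 - q * q * q ^ m) / (1 - q * q ^ m) ^ 2).
  { unfold Am, Bm. simpl. field. nra. }
  assert (E2 : Am m * (1 - Bm m) / (1 - Am m * Bm m) = Am (S m)).
  { rewrite E0. unfold Am, Bm. simpl. field. repeat split; nra. }
  assert (E3 : Bm m * (1 - Am m) / (1 - Am m * Bm m) = Bm (S m)).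
  { rewrite E0. unfold Am, Bm. simpl. field. repeat split; nra. }
  rewrite E2, E3, E1. ring.
Qed.

Lemma tele_sum N : sum_f_R0 (fun j => RogersL (ym (S j))) N = TT 1 - TT (N + 2).
Proof.
  induction N.
  - simpl. rewrite (tele_step 1) by lia. ring.
  - simpl sum_f_R0. rewrite IHN. rewrite (tele_step (N + 2)) by lia.
    replace (S N + 2)%nat with (S (N + 2)) by lia. replace (S (S N)) with (N + 2)%nat by lia. ring.
Qed.

Lemma TT1 : TT 1 = RogersL q + RogersL (1 - q).
Proof.
  unfold TT. replace (Bm 1) with (1 - Am 1).
  - apply refl_RL; auto. apply Am_rng; lia.
  - unfold Am, Bm. simpl. field. nra.
Qed.

Lemma tele_lim : is_lim_seq (fun N => TT (N + 2)) (RogersL (1 - q)).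
Proof.
  assert (Hw : is_lim_seq (fun N => q ^ (S (S N))) 0).
  { apply is_lim_seq_ext with (u := fun N => q * q * q ^ N). intros; simpl; ring.
    replace (Finite 0) with (Rbar_mult (q * q) 0) by (simpl; f_equal; ring).
    apply is_lim_seq_scal_l. apply is_lim_seq_geom. rewrite Rabs_right; lra. }
  unfold TT. replace (RogersL (1 - q)) with (0 + RogersL (1 - q)) by ring.
  apply is_lim_seq_plus'.
  - apply lim_RL0. intros; apply Am_rng; lia.
    assert (D : is_derive (fun w => w * (1 - q) / (1 - q * w)) 0
        ((1 - q) + q * (1 - q) * 0)).
    { auto_derive. lra. field. }
    assert (H := is_lim_seq_continuous _ _ _ (cont_of_deriv _ _ _ D) Hw). cbv beta in H.
    replace (0 * (1 - q) / (1 - q * 0)) with 0 in H by (field).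
    eapply is_lim_seq_ext; [|exact H]. intros n. unfold Am.
    replace (n + 2)%nat with (S (S n)) by lia. simpl. reflexivity.
  - apply is_lim_seq_continuous. apply cont_RL; lra.
    assert (D : is_derive (fun w => (1 - q) / (1 - q * w)) 0 (q * (1 - q))).
    { auto_derive. lra. field. }
    assert (H := is_lim_seq_continuous _ _ _ (cont_of_deriv _ _ _ D) Hw). cbv beta in H.
    replace ((1 - q) / (1 - q * 0)) with (1 - q) in H by (field).
    eapply is_lim_seq_ext; [|exact H]. intros n. unfold Bm.
    replace (n + 2)%nat with (S (S n)) by lia. simpl. reflexivity.
Qed.

Lemma tele : infinite_sum (fun j => RogersL (ym (S j))) (RogersL q).
Proof.
  change (Un_cv (sum_f_R0 (fun j => RogersL (ym (S j)))) (RogersL q)).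
  apply is_lim_seq_Reals.
  apply is_lim_seq_ext with (u := fun N => TT 1 - TT (N + 2)).
  { intros; rewrite tele_sum; reflexivity. }
  replace (RogersL q) with (TT 1 - RogersL (1 - q)) by (rewrite TT1; ring).
  apply is_lim_seq_minus'. apply is_lim_seq_const. apply tele_lim.
Qed.
End Tele.

Lemma Zsq (p d N : Z) : (0 < d)%Z -> (p * p = N * (d * d))%Z -> exists m, N = (m * m)%Z.
Proof.
  intros Hd0 E.
  set (g := Z.gcd p d).
  assert (Hg : g <> 0%Z).
  { intros H0. apply Z.gcd_eq_0 in H0. lia. }
  destruct (Z.gcd_divide_l p d) as [p' Hp].
  destruct (Z.gcd_divide_r p d) as [d' Hd].
  fold g in Hp, Hd.
  assert (G := Z.gcd_div_gcd p d g Hg eq_refl).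
  rewrite Hp, Hd in G. rewrite !Z.div_mul in G by exact Hg.
  rewrite Hp, Hd in E.
  assert (E' : (p' * p' = N * (d' * d'))%Z).
  { apply (Z.mul_reg_l _ _ (g * g)). intros H0; apply Z.mul_eq_0 in H0; tauto.
    replace (g * g * (p' * p'))%Z with (p' * g * (p' * g))%Z by ring. rewrite E. ring. }
  assert (Hdiv : (d' | p')%Z).
  { apply Gauss with p'.
    - exists (N * d')%Z. rewrite E'. ring.
    - apply Zgcd_1_rel_prime. rewrite Z.gcd_comm. exact G. }
  assert (H1 : (d' | 1)%Z).
  { rewrite <- G. apply Z.gcd_greatest; auto. apply Z.divide_refl. }
  apply Z.divide_1_r in H1.
  exists p'. destruct H1; subst d'; lia.
Qed.

Lemma nat_sq (n : nat) (m : Z) : Z.of_nat n = (m * m)%Z -> exists k : nat, n = (k * k)%nat.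
Proof.
  intros H. exists (Z.abs_nat m). apply Nat2Z.inj. rewrite Nat2Z.inj_mul.
  rewrite Nat2Z.inj_abs_nat. rewrite H. rewrite <- Z.abs_mul. symmetry. apply Z.abs_eq. nia.
Qed.

Definition nQ (n : nat) : Q := (Z.of_nat n # 1)%Q.

Lemma Q2R_nQ n : Q2R (nQ n) = INR n.
Proof. unfold nQ, Q2R. simpl. rewrite INR_IZR_INZ. field. Qed.

Lemma sqrt_irr (n : nat) : ~ (exists m : nat, n = (m * m)%nat) ->
  forall x : Q, Q2R x <> sqrt (INR n).
Proof.
  intros Hn x Hx. apply Hn.
  assert (E : Q2R (x * x) = Q2R (nQ n)).
  { rewrite Q2R_mult, Hx, Q2R_nQ. apply sqrt_sqrt. apply pos_INR. }
  apply eqR_Qeq in E. destruct x as [p d]. unfold nQ, Qeq, Qmult in E. simpl in E.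
  destruct (Zsq p (Z.pos d) (Z.of_nat n)) as [m Hm].
  - lia.
  - rewrite Z.mul_1_r in E. rewrite E. rewrite Pos2Z.inj_mul. ring.
  - eapply nat_sq; eauto.
Qed.

Fixpoint PR (a b : Q) (n : nat) (k : nat) : Q * Q :=
  match k with
  | O => (1%Q, 0%Q)
  | S k => ((a * fst (PR a b n k) + nQ n * b * b * snd (PR a b n k))%Q,
            (fst (PR a b n k) + a * snd (PR a b n k))%Q)
  end.

Lemma Q2R_1 : Q2R 1 = 1. Proof. unfold Q2R; simpl; lra. Qed.
Lemma Q2R_0' : Q2R 0 = 0. Proof. unfold Q2R; simpl; lra. Qed.

Lemma powers (a b : Q) (n : nat) k :
  (Q2R a + Q2R b * sqrt (INR n)) ^ k
    = Q2R (fst (PR a b n k)) + Q2R b * Q2R (snd (PR a b n k)) * sqrt (INR n) /\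
  (Q2R a - Q2R b * sqrt (INR n)) ^ k
    = Q2R (fst (PR a b n k)) - Q2R b * Q2R (snd (PR a b n k)) * sqrt (INR n).
Proof.
  assert (Hs : INR n = sqrt (INR n) * sqrt (INR n)) by (symmetry; apply sqrt_sqrt, pos_INR).
  induction k as [|k [IH1 IH2]].
  - cbn [pow PR fst snd]. rewrite Q2R_1, Q2R_0'. rewrite Rmult_0_r, Rmult_0_l. split; ring.
  - cbn [pow PR fst snd].
    rewrite IH1, IH2. rewrite !Q2R_plus, !Q2R_mult, Q2R_nQ.
    set (s := sqrt (INR n)) in *. rewrite Hs. split; ring.
Qed.

Lemma term_alg v k R : 0 < v < 1 -> R * (/ v - v) = (/ v) ^ (S (S k)) - v ^ (S (S k)) ->
  / (R ^ 2) = ym (v ^ 2) (S k).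
Proof.
  intros Hv HR.
  assert (Hw : 0 < v ^ (S k) < 1).
  { pose proof (pow_lt_1_compat v (S k) ltac:(lra) ltac:(lia)).
    pose proof (pow_lt v (S k) ltac:(lra)). lra. }
  set (w := v ^ (S k)) in *.
  rewrite pow_inv in HR.
  assert (E2 : v ^ (S (S k)) = v * w) by reflexivity.
  rewrite E2 in HR.
  assert (HR' : R = (/ (v * w) - v * w) / (/ v - v)).
  { rewrite <- HR. field. split; nra. }
  unfold ym. 
  assert (E3 : (v ^ 2) ^ (S k) = w * w).
  { rewrite <- pow_mult. rewrite Nat.mul_comm, pow_mult. unfold w. ring. }
  assert (E4 : (v ^ 2) ^ (S (S k)) = (v * w) * (v * w)).
  { rewrite <- pow_mult. rewrite Nat.mul_comm, pow_mult. rewrite E2. ring. }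
  rewrite E3, E4, HR'.
  assert (0 < v * w < 1) by (split; nra).
  field. repeat split; nra.
Qed.

Theorem theorem3 (n : nat) (a b : Q) (A B : nat -> Q) :
  (2 <= n)%nat ->
  ~ (exists m : nat, n = (m * m)%nat) ->
  0 < Q2R a -> 0 < Q2R b ->
  Q2R a ^ 2 - INR n * Q2R b ^ 2 = 1 ->
  (forall k : nat, (1 <= k)%nat ->
     (Q2R a + Q2R b * sqrt (INR n)) ^ k = Q2R (A k) + Q2R (B k) * sqrt (INR n)) ->
  infinite_sum
    (fun j : nat => RogersL (/ (Q2R (B (j + 2)%nat) / Q2R b) ^ 2))
    (RogersL (/ (Q2R a + Q2R b * sqrt (INR n)) ^ 2))
  /\
  ((exists za zb : Z, Q2R a = IZR za /\ Q2R b = IZR zb) ->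
   forall k : nat, (1 <= k)%nat -> exists z : Z, Q2R (B k) / Q2R b = IZR z).
Proof.
  intros Hn Hsq Ha Hb Hpell HAB.
  assert (HBk : forall k, (1 <= k)%nat -> Q2R (B k) = Q2R b * Q2R (snd (PR a b n k))).
  { intros k Hk. destruct (powers a b n k) as [P1 _].
    rewrite (HAB k Hk) in P1.
    destruct (Req_dec (Q2R (B k)) (Q2R b * Q2R (snd (PR a b n k)))) as [E|NE]; auto.
    exfalso.
    set (s := sqrt (INR n)) in *.
    set (p := fst (PR a b n k)) in *. set (r := snd (PR a b n k)) in *.
    assert (Heq : (Q2R (B k) - Q2R b * Q2R r) * s = Q2R p - Q2R (A k)) by nra.
    assert (NQ : ~ (B k - b * r == 0)%Q).
    { intros H0. apply Qeq_eqR in H0. rewrite Q2R_minus, Q2R_mult, Q2R_0' in H0. lra. }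
    apply (sqrt_irr n Hsq ((p - A k) / (B k - b * r))%Q).
    rewrite Q2R_div by exact NQ. rewrite !Q2R_minus, Q2R_mult. fold s.
    rewrite <- Heq. field. lra. }
  assert (Hs : sqrt (INR n) * sqrt (INR n) = INR n) by (apply sqrt_sqrt, pos_INR).
  assert (Hs0 : 0 <= sqrt (INR n)) by apply sqrt_pos.
  assert (Hn2 : 2 <= INR n) by (apply (le_INR 2) in Hn; simpl in Hn; lra).
  split.
  - set (s := sqrt (INR n)) in *.
    set (u := Q2R a + Q2R b * s). set (v := Q2R a - Q2R b * s).
    assert (Huv : u * v = 1).
    { rewrite <- Hpell. unfold u, v. rewrite <- Hs. ring. }
    assert (Ha1 : 1 < Q2R a) by nra.
    assert (Hu : 1 < u) by (unfold u; nra).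
    assert (Hv : 0 < v < 1) by (split; nra).
    assert (Hvu : u = / v) by (apply (Rmult_eq_reg_r v); [rewrite Huv; field|]; lra).
    assert (Hq : 0 < v ^ 2 < 1) by (split; nra).
    replace (RogersL (/ u ^ 2)) with (RogersL (v ^ 2)) by (rewrite Hvu; f_equal; field; lra).
    apply is_series_Reals.
    apply is_series_ext with (a := fun j => RogersL (ym (v ^ 2) (S j))).
    2:{ apply is_series_Reals, tele; auto. }
    intros j. cbv beta. f_equal.
    rewrite HBk by lia.
    replace (Q2R b * Q2R (snd (PR a b n (j + 2))) / Q2R b) with (Q2R (snd (PR a b n (j + 2)))) by (field; lra).
    symmetry. apply term_alg; auto.
    destruct (powers a b n (j + 2)) as [P1 P2]. fold s u v in P1, P2.
    replace (j + 2)%nat with (S (S j)) in * by lia.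
    rewrite <- Hvu. rewrite P1, P2. unfold u, v. ring.
  - intros [za [zb [Eza Ezb]]] k Hk.
    assert (Hint : forall k, (exists z, Q2R (fst (PR a b n k)) = IZR z) /\
                             (exists z, Q2R (snd (PR a b n k)) = IZR z)).
    { induction k0 as [|k0 [[p Hp] [r Hr]]].
      - cbn [PR fst snd]. split; [exists 1%Z; apply Q2R_1 | exists 0%Z; apply Q2R_0'].
      - cbn [PR fst snd]. rewrite !Q2R_plus, !Q2R_mult, Q2R_nQ, Hp, Hr, Eza, Ezb, INR_IZR_INZ.
        split.
        + exists (za * p + Z.of_nat n * zb * zb * r)%Z. rewrite plus_IZR, !mult_IZR. ring.
        + exists (p + za * r)%Z. rewrite plus_IZR, !mult_IZR. ring. }
    destruct (Hint k) as [_ [r Hr]]. exists r.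
    rewrite HBk by auto. rewrite <- Hr. field. lra.
Qed.
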